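(* Outer Multi-Objective RL (OMORL), Functions from Occupancy Measures to Reals (FOMR) and Functions from Trajectory Lotteries to Reals (FTLR) are equally expressive: for every environment $E$, $\mathrm{Ord}_{\mathrm{OMORL}}(E)=\mathrm{Ord}_{\mathrm{FOMR}}(E)=\mathrm{Ord}_{\mathrm{FTLR}}(E)$.
   Context: An environment is a tuple $E=(\mathcal S,\mathcal A,\mathcal T,\mathcal I)$ where $\mathcal S,\mathcal A$ are finite nonempty sets, $\mathcal T:\mathcal S\times\mathcal A\to\Delta(\mathcal S)$ and $\mathcal I\in\Delta(\mathcal S)$. A policy is a map $\pi:\mathcal S\to\Delta(\mathcal A)$ (stationary, possibly stochastic); $\Pi^E$ denotes the set of all policies. A trajectory $\xi=(s_0,a_0,s_1,a_1,\dots)$ is generated under $\pi$ by $s_0\sim\mathcal I$, $a_t\sim\pi(s_t)$, $s_{t+1}\sim\mathcal T(s_t,a_t)$; $\mathbb E^\pi_\xi,\mathbb P^\pi$ denote expectation and probability under this distribution. An objective-specification formalism $X$ assigns to each environment $E$ a set of objective specifications, each inducing a total preorder $\succeq$ on $\Pi^E$; $\mathrm{Ord}_X(E)$ is the set of total preorders so induced. A specification defining a scalar $J:\Pi^E\to\mathbb R$ induces $\pi_1\succeq\pi_2\iff J(\pi_1)\ge J(\pi_2)$. Occupancy measure: for $\gamma\in[0,1)$, $\vec m_\gamma(\pi)\in\mathbb R^{\mathcal S\times\mathcal A\times\mathcal S}$, $\vec m_\gamma(\pi)[s,a,s']=\sum_{t=0}^\infty\gamma^t\,\mathbb P^\pi[s_t=s,a_t=a,s_{t+1}=s']$,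 and $\vec m_\gamma(\Pi^E)=\{\vec m_\gamma(\pi):\pi\in\Pi^E\}$. Trajectory lottery: $L_{k,\pi}$ is the distribution of $(s_0,a_0,\dots,a_{k-1},s_k)$ under $\pi$, $L_\pi=(L_{0,\pi},L_{1,\pi},\dots)$, and $L_{\Pi^E}=\{L_\pi:\pi\in\Pi^E\}$. OMORL: specification $(k,\mathcal R,f,\gamma)$ with $k\in\mathbb N$, $\mathcal R:\mathcal S\times\mathcal A\times\mathcal S\to\mathbb R^k$ with components $\mathcal R_i$, $f:\mathbb R^k\to\mathbb R$, $\gamma\in[0,1)$; $J(\pi)=f(J_1(\pi),\dots,J_k(\pi))$ with $J_i(\pi)=\mathbb E^\pi_\xi[\sum_{t=0}^\infty\gamma^t\mathcal R_i(s_t,a_t,s_{t+1})]$. FOMR: specification $(f,\gamma)$ with $\gamma\in[0,1)$, $f:\vec m_\gamma(\Pi^E)\to\mathbb R$; $J(\pi)=f(\vec m_\gamma(\pi))$. FTLR: specification $(f)$ with $f:L_{\Pi^E}\to\mathbb R$; $J(\pi)=f(L_\pi)$. *)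

(* Defs.v *)
From HB Require Import structures.
From mathcomp Require Import all_boot all_order all_algebra.
From mathcomp Require Import all_classical all_reals all_analysis.
From mathcomp Require Import Rstruct Rstruct_topology.

Set Implicit Arguments.
Unset Strict Implicit.
Unset Printing Implicit Defensive.

Import Order.TTheory GRing.Theory Num.Theory.
Local Open Scope ring_scope.

Notation R := Rdefinitions.R.

Definition is_dist (X : finType) (p : X -> R) : Prop :=
  (forall x, 0 <= p x) /\ \sum_(x : X) p x = 1.

Record env := Env {
  st : finType;
  ac : finType;
  st_inh : st;
  ac_inh : ac;
  trans : st -> ac -> st -> R;
  init : st -> R;
  trans_dist : forall s a, is_dist (trans s a);
  init_dist : is_dist init
}.
Arguments trans : clear implicits.
Arguments init : clear implicits.

Definition infsum (u : nat -> R) : R := limn (fun n => \sum_(0 <= t < n) u t).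

Definition policy (E : env) := {q : st E -> ac E -> R | forall s, is_dist (q s)}.

Definition pol (E : env) (p : policy E) : st E -> ac E -> R := proj1_sig p.

(* A trajectory prefix (s_0, a_0, ..., a_{k-1}, s_k). *)
Definition prefix (E : env) (k : nat) : finType :=
  ({ffun 'I_k.+1 -> st E} * {ffun 'I_k -> ac E})%type.

Definition prefix_prob (E : env) (p : policy E) (k : nat) (x : prefix E k) : R :=
  init E (x.1 ord0) *
  \prod_(t < k) (pol p (x.1 (inord t)) (x.2 t) *
                 trans E (x.1 (inord t)) (x.2 t) (x.1 (inord t.+1))).

Definition lottery (E : env) := forall k : nat, prefix E k -> R.

Definition lott (E : env) (p : policy E) : lottery E := fun k => prefix_prob p (k := k).

Definition stepP (E : env) (p : policy E) (t : nat) (s : st E) (a : ac E) (s' : st E) : R :=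
  \sum_(x : prefix E t.+1 |
         (x.1 (inord t) == s) && (x.2 (inord t) == a) && (x.1 (inord t.+1) == s'))
     prefix_prob p x.

Definition occ (E : env) (g : R) (p : policy E) : st E -> ac E -> st E -> R :=
  fun s a s' => infsum (fun t => g ^+ t * stepP p t s a s').

(* Expected discounted return E^pi[sum_t g^t r(s_t,a_t,s_{t+1})], written as
   sum_t g^t E^pi[r(s_t,a_t,s_{t+1})]. *)
Definition disc_return (E : env) (g : R) (r : st E -> ac E -> st E -> R)
  (p : policy E) : R :=
  infsum (fun t => g ^+ t * \sum_(s : st E) \sum_(a : ac E) \sum_(s' : st E)
                          stepP p t s a s' * r s a s').

Definition induced (E : env) (J : policy E -> R) : policy E -> policy E -> Prop :=
  fun p q => J q <= J p.

Definition discount_ok (g : R) : Prop := 0 <= g /\ g < 1.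

Definition Ord_OMORL (E : env) : (policy E -> policy E -> Prop) -> Prop :=
  fun ord => exists (k : nat) (rw : 'I_k -> st E -> ac E -> st E -> R)
                    (f : 'rV[R]_k -> R) (g : R),
    discount_ok g /\
    ord = induced (fun p => f (\row_(i < k) disc_return g (rw i) p)).

Definition occ_set (E : env) (g : R) :=
  {m : st E -> ac E -> st E -> R | exists p : policy E, m = occ g p}.

Definition occ_in (E : env) (g : R) (p : policy E) : occ_set E g :=
  exist _ (occ g p) (ex_intro _ p erefl).

Definition Ord_FOMR (E : env) : (policy E -> policy E -> Prop) -> Prop :=
  fun ord => exists (g : R) (f : occ_set E g -> R),
    discount_ok g /\ ord = induced (fun p => f (occ_in g p)).

Definition lott_set (E : env) := {L : lottery E | exists p : policy E, L = lott p}.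

Definition lott_in (E : env) (p : policy E) : lott_set E :=
  exist _ (lott p) (ex_intro _ p erefl).

Definition Ord_FTLR (E : env) : (policy E -> policy E -> Prop) -> Prop :=
  fun ord => exists f : lott_set E -> R, ord = induced (fun p => f (lott_in p)).

Arguments Ord_OMORL : clear implicits.
Arguments Ord_FOMR : clear implicits.
Arguments Ord_FTLR : clear implicits.

(* Main.v *)
Set Warnings "-all".
From Pilot Require Import Defs.
From mathcomp Require Import all_boot all_order all_algebra all_classical all_reals all_analysis Rstruct Rstruct_topology.
From mathcomp Require Import lra.
Import Pilot.Defs.
Set Warnings "-all".
Import Order.TTheory GRing.Theory Num.Theory.
Local Open Scope ring_scope.

Lemma psum_le (g : R) (c : nat -> R) : 0 <= g < 1 -> (forall t, 0 <= c t <= 1) ->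
  forall n, \sum_(0 <= t < n) g ^+ t * c t <= (1 - g ^+ n) / (1 - g).
Proof.
move=> /andP[g0 g1] hc.
have hg : 0 < 1 - g by rewrite subr_gt0.
elim=> [|n IH].
  by rewrite big_geq // expr0 subrr mul0r.
rewrite big_nat_recr //= exprS.
have [c0 c1] := andP (hc n).
rewrite ler_pdivlMr // in IH; rewrite ler_pdivlMr //.
have gn : 0 <= g ^+ n by rewrite exprn_ge0.
set S := \sum_(0 <= t < n) _ in IH *.
set G := g ^+ n in gn IH *.
have h3 : 0 <= G * (1 - c n) * (1 - g) by rewrite mulr_ge0 ?mulr_ge0 ?subr_ge0 // ltW.
nra.
Qed.

Lemma psum_cvg (g : R) (c : nat -> R) : 0 <= g < 1 -> (forall t, 0 <= c t <= 1) ->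
  cvgn (fun n => \sum_(0 <= t < n) g ^+ t * c t).
Proof.
move=> hg hc; have /andP[g0 g1] := hg.
have hg' : 0 < 1 - g by rewrite subr_gt0.
apply: nondecreasing_is_cvgn.
  move=> n m nm /=; rewrite (@big_cat_nat _ _ _ n 0 m _ _ (leq0n n) nm) /= lerDl.
  by apply: sumr_ge0 => t _; have /andP[? ?] := hc t; rewrite mulr_ge0 // exprn_ge0.
exists (1 / (1 - g)) => _ [n _ <-].
apply: le_trans (psum_le _ _ hg hc n) _.

rewrite ler_pM2r ?invr_gt0 // lerBlDr lerDl exprn_ge0 //.
Qed.

Lemma term_le_infsum (g : R) (c : nat -> R) : 0 <= g < 1 -> (forall t, 0 <= c t <= 1) ->
  forall k, g ^+ k * c k <= infsum (fun t => g ^+ t * c t).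
Proof.
move=> hg hc k; have /andP[g0 g1] := hg.
have nd : {homo (fun n => \sum_(0 <= t < n) g ^+ t * c t) : n m / (n <= m)%N >-> n <= m}.
  move=> n m nm /=; rewrite (@big_cat_nat _ _ _ n 0 m _ _ (leq0n n) nm) /= lerDl.
  by apply: sumr_ge0 => t _; have /andP[? ?] := hc t; rewrite mulr_ge0 // exprn_ge0.
apply: le_trans (nondecreasing_cvgn_le nd (psum_cvg _ _ hg hc) k.+1).
rewrite big_nat_recr //= lerDr.
by apply: sumr_ge0 => t _; have /andP[? ?] := hc t; rewrite mulr_ge0 // exprn_ge0.
Qed.

Lemma infsum_scale (g : R) (c : nat -> R) (a : R) : 0 <= g < 1 -> (forall t, 0 <= c t <= 1) ->
  infsum (fun t => a * (g ^+ t * c t)) = a * infsum (fun t => g ^+ t * c t).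
Proof.
move=> hg hc; rewrite /infsum.
have -> : (fun n => \sum_(0 <= t < n) a * (g ^+ t * c t)) = (fun n => a * \sum_(0 <= t < n) g ^+ t * c t).
  by apply: funext => n; rewrite big_distrr.
apply: cvg_lim; first exact: Rhausdorff.
apply: cvgMl_tmp.
exact: (psum_cvg _ _ hg hc).
Qed.
Set Implicit Arguments.
Unset Strict Implicit.

Definition ext (E : env) (k : nat) (x : prefix E k) (a : ac E) (s : st E) : prefix E k.+1 :=
  ([ffun i : 'I_k.+2 => match @insub _ (fun n => (n < k.+1)%N) 'I_k.+1 (val i) with
                          | Some j => x.1 j | None => s end],
   [ffun i : 'I_k.+1 => match @insub _ (fun n => (n < k)%N) 'I_k (val i) with
                          | Some j => x.2 j | None => a end]).

Arguments ext {E k}.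
Arguments ext : simpl never.

Definition restr (E : env) (k : nat) (y : prefix E k.+1) : prefix E k :=
  ([ffun i => y.1 (widen_ord (leqnSn _) i)], [ffun i => y.2 (widen_ord (leqnSn _) i)]).

Arguments restr {E k}.

Lemma ext1 (E : env) (k : nat) (x : prefix E k) a s (i : 'I_k.+2) :
  (ext x a s).1 i = if (val i < k.+1)%N then x.1 (inord i) else s.
Proof.
rewrite ffunE; case: insubP => [j hi hj|/negbTE -> //].
rewrite hi; congr (x.1 _); apply: val_inj; by rewrite hj /= inordK.
Qed.

Lemma ext2w (E : env) (k : nat) (x : prefix E k) a s (j : 'I_k) h :
  (ext x a s).2 (widen_ord h j) = x.2 j.
Proof.
rewrite ffunE; case: insubP => [j' hi hj|/=]; last by rewrite ltn_ord.
by congr (x.2 _); apply: val_inj.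
Qed.

Lemma ext2m (E : env) (k : nat) (x : prefix E k) a s :
  (ext x a s).2 ord_max = a.
Proof. by rewrite ffunE; case: insubP => [j' /= hi _|//]; rewrite ltnn in hi. Qed.

Lemma ext_restr (E : env) (k : nat) (y : prefix E k.+1) :
  ext (restr y) (y.2 ord_max) (y.1 ord_max) = y.
Proof.
case: y => y1 y2; congr pair; apply/ffunP => i /=.
- rewrite ffunE; case: insubP => [j hi hj|/= hi].
    by rewrite ffunE; congr (y1 _); apply: val_inj.
  congr (y1 _); apply: val_inj => /=; have := ltn_ord i; rewrite ltnS leq_eqVlt ltnNge.
  by rewrite ltnNge negbK in hi; rewrite hi orbF => /eqP.
- rewrite ffunE; case: insubP => [j hi hj|/= hi].
    by rewrite ffunE; congr (y2 _); apply: val_inj.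
  congr (y2 _); apply: val_inj => /=; have := ltn_ord i; rewrite ltnS leq_eqVlt ltnNge.
  by rewrite ltnNge negbK in hi; rewrite hi orbF => /eqP.
Qed.

Lemma restr_ext (E : env) (k : nat) (x : prefix E k) a s :
  (restr (ext x a s), (ext x a s).2 ord_max, (ext x a s).1 ord_max) = (x, a, s).
Proof.
rewrite ext2m ext1 /= ltnn; congr (_, _, _).
case: x => x1 x2; congr pair; apply/ffunP => i; rewrite ffunE.
  by rewrite ext1 /= ltn_ord; congr (x1 _); apply: val_inj; rewrite /= inordK.
by rewrite ext2w.
Qed.

Lemma sum_prefixS (E : env) (k : nat) (F : prefix E k.+1 -> R) :
  \sum_(y : prefix E k.+1) F y =
  \sum_(x : prefix E k) \sum_(a : ac E) \sum_(s : st E) F (ext x a s).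
Proof.
rewrite (reindex (fun z : (prefix E k * ac E) * st E => ext z.1.1 z.1.2 z.2)).
  rewrite -(pair_bigA _ (fun xa s => F (ext xa.1 xa.2 s))) /=.
  by rewrite -(pair_bigA _ (fun x a => \sum_s F (ext x a s))) /=.
exists (fun y => (restr y, y.2 ord_max, y.1 ord_max)) => [[[x a] s] _|y _] /=.
  by rewrite restr_ext.
by rewrite ext_restr.
Qed.

Lemma ext1_inord (E : env) (k : nat) (x : prefix E k) a s (i : nat) : (i <= k.+1)%N ->
  (ext x a s).1 (inord i) = if (i < k.+1)%N then x.1 (inord i) else s.
Proof. move=> hi; have e : val (inord i : 'I_k.+2) = i := inordK hi. by rewrite ext1 e inordK. Qed.

Lemma inord_max (k : nat) : (inord k : 'I_k.+1) = ord_max.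
Proof. by apply: val_inj; rewrite /= inordK. Qed.

Lemma inord_0 (k : nat) : (inord 0 : 'I_k.+1) = ord0.
Proof. by apply: val_inj; rewrite /= inordK. Qed.

Lemma pp_ext (E : env) (p : policy E) (k : nat) (x : prefix E k) a s :
  prefix_prob p (ext x a s) =
  prefix_prob p x * (pol p (x.1 ord_max) a * trans E (x.1 ord_max) a s).
Proof.
rewrite /prefix_prob big_ord_recr -!mulrA; congr (_ * _).
  by rewrite -(inord_0 k.+1) ext1_inord // inord_0.
congr (_ * _).
  apply: eq_bigr => t _.
  have ht := ltn_ord t.
  have h1 : (t < k.+1)%N by rewrite ltnS ltnW.
  have h2 : (t.+1 < k.+1)%N by rewrite ltnS.
  rewrite (@ext1_inord E k x a s t) /=; last by rewrite ltnW.
  rewrite (@ext1_inord E k x a s t.+1) /=; last by rewrite ltnW.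
  rewrite ext2w; first by rewrite h1 h2.
  exact: s.
have e1 : val (inord k : 'I_k.+2) = k by apply: inordK; rewrite ltnW.
have e2 : val (inord k.+1 : 'I_k.+2) = k.+1 by apply: inordK.
rewrite !ext1 ext2m e1 e2 ltnSn ltnn.
rewrite inordK; last by rewrite /= ltnW.
by rewrite inord_val.
Qed.

Lemma pol_ge0 (E : env) (p : policy E) s a : 0 <= pol p s a.
Proof. exact: (proj1 (proj2_sig p s) a). Qed.

Lemma pol_sum (E : env) (p : policy E) s : \sum_a pol p s a = 1.
Proof. exact: (proj2 (proj2_sig p s)). Qed.

Lemma pp_ge0 (E : env) (p : policy E) k (x : prefix E k) : 0 <= prefix_prob p x.
Proof.
rewrite /prefix_prob mulr_ge0 //; first exact: (proj1 (init_dist E)).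
apply: prodr_ge0 => t _; rewrite mulr_ge0 ?pol_ge0 //.
exact: (proj1 (trans_dist _ _) _).
Qed.

Lemma pp_sum (E : env) (p : policy E) k : \sum_(x : prefix E k) prefix_prob p x = 1.
Proof.
elim: k => [|k IH].
  rewrite (eq_bigr (fun x : prefix E 0 => init E (x.1 ord0))); last first.
    by move=> x _; rewrite /prefix_prob big_ord0 mulr1.
  rewrite -(pair_bigA _ (fun (f1 : {ffun 'I_1 -> st E}) (f2 : {ffun 'I_0 -> ac E}) => init E (f1 ord0))) /=.
  under eq_bigr do rewrite sumr_const card_ffun card_ord expn0 mulr1n.
  have := bigA_distr_bigA (fun (i : 'I_1) (s : st E) => init E s).
  move/(_ 0 1 *%R +%R) => h.
  rewrite (eq_bigr (fun f : {ffun 'I_1 -> st E} => \prod_(i < 1) init E (f i))); last first.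
    by move=> f _; rewrite big_ord1.
  rewrite -h big_ord1; exact: (proj2 (init_dist E)).
rewrite sum_prefixS -[RHS]IH; apply: eq_bigr => x _.
under eq_bigr => a _ do under eq_bigr => s' _ do rewrite pp_ext mulrA.
under eq_bigr => a _ do rewrite -big_distrr /= (proj2 (trans_dist _ _)) mulr1.
by rewrite -big_distrr /= pol_sum mulr1.
Qed.

Definition W (E : env) (p : policy E) (t : nat) (s : st E) : R :=
  \sum_(x : prefix E t | x.1 ord_max == s) prefix_prob p x.

Arguments W {E}.

Lemma sum2_pick (A B : finType) (a : A) (b : B) (G : A -> B -> R) :
  \sum_x \sum_y (if (x == a) && (y == b) then G x y else 0) = G a b.
Proof.
rewrite (bigD1 a) //= [X in _ + X]big1 ?addr0; last first.
  by move=> x xa; apply: big1 => y _; rewrite (negbTE xa).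
rewrite (bigD1 b) //= !eqxx /= [X in _ + X]big1 ?addr0 // => y yb.
by rewrite (negbTE yb).
Qed.

Lemma stepP_dec (E : env) (p : policy E) t s a s' :
  stepP p t s a s' = W p t s * (pol p s a * trans E s a s').
Proof.
rewrite /stepP /W big_distrl [RHS]big_mkcond [LHS]big_mkcond sum_prefixS.
apply: eq_bigr => x _.
have e1 : forall b u, (ext x b u).1 (inord t) = x.1 ord_max.
  by move=> b u; rewrite ext1_inord // ltnSn inord_max.
have e2 : forall b u, (ext x b u).1 (inord t.+1) = u.
  by move=> b u; rewrite ext1_inord // ltnn.
have e3 : forall b u, (ext x b u).2 (inord t) = b.
  by move=> b u; rewrite inord_max ext2m.
under eq_bigr => b _ do under eq_bigr => u _ do rewrite e1 e2 e3 pp_ext.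
case: eqP => [->|_] /=.

  exact: (sum2_pick a s' (fun b u => prefix_prob p x * (pol p s b * trans E s b u))).
by apply: big1 => b _; apply: big1 => u _.
Qed.

Lemma W_bnd (E : env) (p : policy E) t s : 0 <= W p t s <= 1.
Proof.
apply/andP; split; first by apply: sumr_ge0 => x _; exact: pp_ge0.
rewrite -(pp_sum p t) [X in _ <= X](bigID (fun x : prefix E t => x.1 ord_max == s)) /= lerDl.
by apply: sumr_ge0 => x _; exact: pp_ge0.
Qed.

Definition V (E : env) (g : R) (p : policy E) (s : st E) : R :=
  infsum (fun t => g ^+ t * W p t s).
Arguments V {E}.

Lemma occ_dec (E : env) (g : R) (p : policy E) s a s' : 0 <= g < 1 ->
  occ g p s a s' = (pol p s a * trans E s a s') * V g p s.
Proof.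
move=> hg; rewrite /occ /V -(infsum_scale g (fun t => W p t s)) //; last by move=> t; exact: W_bnd.
congr infsum; apply: funext => t; rewrite stepP_dec.
by rewrite mulrA [RHS]mulrC.
Qed.

Lemma occ_sum1 (E : env) (g : R) (p : policy E) s a : 0 <= g < 1 ->
  \sum_s' occ g p s a s' = pol p s a * V g p s.
Proof.
move=> hg; under eq_bigr => s' _ do rewrite occ_dec // mulrAC.
by rewrite -big_distrr /= (proj2 (trans_dist _ _)) mulr1.
Qed.

Lemma occ_sum (E : env) (g : R) (p : policy E) s : 0 <= g < 1 ->
  \sum_a \sum_s' occ g p s a s' = V g p s.
Proof.
move=> hg; under eq_bigr => a _ do rewrite occ_sum1 //.
by rewrite -big_distrl /= pol_sum mul1r.
Qed.

Lemma occ_lott (E : env) (g : R) (p q : policy E) : 0 < g < 1 -> occ g p = occ g q ->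
  forall k (x : prefix E k), prefix_prob p x = prefix_prob q x.
Proof.
move=> /andP[g0 g1] h.
have hg : 0 <= g < 1 by rewrite ltW.
have hV s : V g p s = V g q s by rewrite -!occ_sum // h.
have hpol s a : 0 < V g p s -> pol p s a = pol q s a.
  move=> Vp; apply: (mulIf (lt0r_neq0 Vp)).
  by rewrite -occ_sum1 // h occ_sum1 // hV.
elim=> [|k IH] x.
  by rewrite /prefix_prob !big_ord0.
rewrite -(ext_restr x) !pp_ext -IH.
set y := restr x.
have [z|nz] := eqVneq (prefix_prob p y) 0; first by rewrite z !mul0r.
have pos : 0 < prefix_prob p y by rewrite lt0r nz pp_ge0.
rewrite hpol //.
have Wge : prefix_prob p y <= W p k (y.1 ord_max).
  by rewrite /W (bigD1 y) //= lerDl; apply: sumr_ge0 => z _; exact: pp_ge0.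
apply: (lt_le_trans (y := g ^+ k * W p k (y.1 ord_max))).
  by rewrite mulr_gt0 ?exprn_gt0 // (lt_le_trans pos Wge).
exact: (term_le_infsum g (fun t => W p t (y.1 ord_max)) hg (fun t => W_bnd p t _) k).
Qed.

Lemma factor_through (P T U : Type) (phi : P -> T) (psi : P -> U) (f : T -> R) :
  (forall p q, psi p = psi q -> phi p = phi q) ->
  exists f' : U -> R, forall p, f' (psi p) = f (phi p).
Proof.
move=> H.
exists (fun u => match pselect (exists p, psi p = u) with
                 | left h => f (phi (proj1_sig (cid h))) | right _ => 0 end).
move=> p; case: pselect => [h|h]; last by exfalso; apply: h; exists p.
by case: cid => /= q hq; rewrite (H _ _ hq).
Qed.

Lemma exist_eq (A : Type) (P : A -> Prop) (x y : A) (hx : P x) (hy : P y) :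
  x = y -> exist P x hx = exist P y hy.
Proof. by move=> e; subst y; congr exist; exact: Prop_irrelevance. Qed.

Lemma lott_pp (E : env) (p q : policy E) : lott p = lott q ->
  forall k (x : prefix E k), prefix_prob p x = prefix_prob q x.
Proof. by move=> h k x; exact: (congr1 (fun L => L k x) h). Qed.

Lemma pp_lott (E : env) (p q : policy E) :
  (forall k (x : prefix E k), prefix_prob p x = prefix_prob q x) -> lott p = lott q.
Proof.
move=> h; apply: functional_extensionality_dep => k; apply: funext => x; exact: h.
Qed.

Lemma stepP_eq (E : env) (p q : policy E) :
  (forall k (x : prefix E k), prefix_prob p x = prefix_prob q x) ->
  forall t s a s', stepP p t s a s' = stepP q t s a s'.
Proof. by move=> h t s a s'; rewrite /stepP; apply: eq_bigr => x _; rewrite h. Qed.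

Lemma incl1 (E : env) ord : Ord_OMORL E ord -> Ord_FTLR E ord.
Proof.
move=> [k [rw [f [g [hg ->]]]]].
have [p q hpq|f' hf'] := @factor_through _ _ _ (fun p => \row_(i < k) disc_return g (rw i) p)
   (@lott_in E) f.
  have hl : lott p = lott q := congr1 (@proj1_sig _ _) hpq.
  have hs := stepP_eq (lott_pp hl).
  apply/rowP => i; rewrite !mxE /disc_return; congr infsum; apply: funext => t.
  by congr (_ * _); apply: eq_bigr => s _; apply: eq_bigr => a _; apply: eq_bigr => s' _; rewrite hs.
exists f'; congr induced; apply: funext => p; by rewrite hf'.
Qed.

Lemma incl2 (E : env) ord : Ord_FTLR E ord -> Ord_FOMR E ord.
Proof.
move=> [f ->].
have hg : 0 < (1/2 : R) < 1 by apply/andP; split; lra.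
have [p q hpq|f' hf'] := @factor_through _ _ _ (@lott_in E) (@occ_in E (1/2)) f.
  have ho : occ (1/2) p = occ (1/2) q := congr1 (@proj1_sig _ _) hpq.
  by apply: exist_eq; apply: pp_lott; exact: occ_lott hg ho.
exists (1/2), f'; split.
  by split; lra.
congr induced; apply: funext => p; by rewrite hf'.
Qed.

Definition T3 (E : env) : finType := (st E * (ac E * st E))%type.

Definition rwi (E : env) (i : 'I_#|T3 E|) : st E -> ac E -> st E -> R :=
  fun s a s' => (((s, (a, s')) : T3 E) == enum_val i)%:R.

Lemma disc_rw (E : env) (g : R) (p : policy E) (i : 'I_#|T3 E|) :
  disc_return g (rwi i) p = occ g p (enum_val i).1 (enum_val i).2.1 (enum_val i).2.2.
Proof.
rewrite /disc_return /occ; congr infsum; apply: funext => t; congr (_ * _).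
rewrite /rwi; move: (enum_val i) => [s0 [a0 s0']] /=.
under eq_bigr => s _ do rewrite (pair_bigA _ (fun a s' => stepP p t s a s' * (((s, (a, s')) : T3 E) == (s0, (a0, s0')))%:R)).
rewrite (pair_bigA _ (fun s (w : (ac E * st E)%type) => stepP p t s w.1 w.2 * (((s, (w.1, w.2)) : T3 E) == (s0, (a0, s0')))%:R)) /=.
rewrite (bigD1 ((s0, (a0, s0')) : T3 E)) //= eqxx mulr1 big1 ?addr0 //.
by move=> [x [y z]] /= ne; rewrite (negbTE ne) mulr0.
Qed.

Lemma incl3 (E : env) ord : Ord_FOMR E ord -> Ord_OMORL E ord.
Proof.
move=> [g [f [hg ->]]].
have [p q hpq|f' hf'] := @factor_through _ _ _ (@occ_in E g)
   (fun p => \row_(i < #|T3 E|) disc_return g (@rwi E i) p) f.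
  apply: exist_eq.
  apply: funext => s; apply: funext => a; apply: funext => s'.
  have := congr1 (fun v : 'rV[R]_#|T3 E| => v 0 (enum_rank ((s, (a, s')) : T3 E))) hpq.
  by rewrite /= !mxE !disc_rw enum_rankK.
exists #|T3 E|, (@rwi E), f', g; split => //.
congr induced; apply: funext => p; by rewrite hf'.
Qed.

Theorem theorem2 (E : env) :
  Ord_OMORL E = Ord_FOMR E /\ Ord_FOMR E = Ord_FTLR E.
Proof.
split; apply: funext => ord; apply: propext; split.
- by move/incl1/incl2.
- exact: incl3.
- by move/incl3/incl1.
- exact: incl2.
Qed.
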